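(* Let $G$ and $H$ be connected graphs of orders $m\geq 2$ and $n\geq 2$, respectively, with $\mathrm{ldim}_f(G)=\frac{m}{2}$ and $\mathrm{ldim}_f(H)=\frac{n}{2}$. Then $\mathrm{ldim}_f(G\square H)\geq \max\{\mathrm{ldim}_f(G),\mathrm{ldim}_f(H)\}$.
   Context: All graphs are finite, simple and connected; $d$ is the shortest-path distance. For an edge $uv$ of a graph $X$, $L_X(uv)=\{x\in V(X): d_X(u,x)\neq d_X(v,x)\}$. A function $f:V(X)\to[0,1]$ is a local resolving function of $X$ if $\sum_{x\in L_X(uv)}f(x)\geq 1$ for every edge $uv$; $\mathrm{ldim}_f(X)$ is the minimum of $\sum_{v}f(v)$ over all local resolving functions. The Cartesian product $G\square H$ has vertex set $V(G)\times V(H)$, with $(u_1,v_1)$ adjacent to $(u_2,v_2)$ iff ($u_1u_2\in E(G)$ and $v_1=v_2$) or ($u_1=u_2$ and $v_1v_2\in E(H)$). *)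

(* Defs.v *)
From HB Require Import structures.
From mathcomp Require Import all_boot all_order all_algebra.
Set Implicit Arguments. Unset Strict Implicit. Unset Printing Implicit Defensive.
Import Order.TTheory GRing.Theory Num.Theory.

Definition simple_graph (T : finType) (e : rel T) : Prop :=
  symmetric e /\ irreflexive e.

Definition connected_graph (T : finType) (e : rel T) : Prop :=
  forall u v : T, connect e u v.

Fixpoint reach (T : finType) (e : rel T) (k : nat) (u : T) : {set T} :=
  match k with
  | 0 => [set u]
  | k'.+1 => reach e k' u :|: [set y | [exists x in reach e k' u, e x y]]
  end.

(* shortest-path distance: least k <= #|T| with v within k steps of u
   (for connected graphs this is the usual distance). *)
Definition dist (T : finType) (e : rel T) (u v : T) : nat :=
  find (fun k => v \in reach e k u) (iota 0 #|T|.+1).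

Definition Lset (T : finType) (e : rel T) (u v : T) : {set T} :=
  [set x | dist e u x != dist e v x].

Local Open Scope ring_scope.

Definition weight (R : realFieldType) (T : finType) (f : T -> R) : R :=
  \sum_(x : T) f x.

Definition local_resolving (R : realFieldType) (T : finType) (e : rel T)
    (f : T -> R) : Prop :=
  (forall x, 0 <= f x <= 1) /\
  (forall u v, e u v -> 1 <= \sum_(x in Lset e u v) f x).

Definition is_ldimf (R : realFieldType) (T : finType) (e : rel T) (r : R) : Prop :=
  (exists f : T -> R, local_resolving e f /\ weight f = r) /\
  (forall f : T -> R, local_resolving e f -> r <= weight f).

Definition cart_rel (T1 T2 : finType) (e1 : rel T1) (e2 : rel T2) : rel (T1 * T2) :=
  fun p q => (e1 p.1 q.1 && (p.2 == q.2)) || ((p.1 == q.1) && e2 p.2 q.2).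

(* Main.v *)
Require Import Defs.
From HB Require Import structures.
From mathcomp Require Import all_boot all_order all_algebra.
From mathcomp Require Import zify.
Import Order.TTheory GRing.Theory Num.Theory.
Set Implicit Arguments. Unset Strict Implicit. Unset Printing Implicit Defensive.

Section Gen.
Variables (T : finType) (e : rel T).

Lemma reachS k u : reach e k.+1 u =
  reach e k u :|: [set y | [exists x in reach e k u, e x y]].
Proof. by []. Qed.

Lemma reach_mono k u : reach e k u \subset reach e k.+1 u.
Proof. exact: subsetUl. Qed.

Lemma reach_le j k u : (j <= k)%N -> reach e j u \subset reach e k u.
Proof.
elim: k => [|k IH]; first by rewrite leqn0 => /eqP ->.
rewrite leq_eqVlt => /orP [/eqP -> //|]; rewrite ltnS => /IH H.
exact: subset_trans H (reach_mono _ _).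
Qed.

Lemma reach_stable k u j : reach e k u = reach e k.+1 u ->
  reach e (j + k) u = reach e k u.
Proof.
move=> H; elim: j => [//|j IH].
by rewrite addSn /= IH -/(reach e k.+1 u) -H.
Qed.

Lemma reach_card k u : (forall i, (i < k)%N -> reach e i u != reach e i.+1 u) ->
  (k < #|reach e k u|)%N.
Proof.
elim: k => [|k IH] H; first by rewrite /= cards1.
have H1 : (k < #|reach e k u|)%N by apply: IH => i Hi; apply: H; lia.
have H2 : (#|reach e k u| < #|reach e k.+1 u|)%N.
  by apply: proper_card; rewrite properEneq H // reach_mono.
lia.
Qed.

Lemma reach_max k u : reach e k u \subset reach e #|T| u.
Proof.
case: (leqP k #|T|) => Hk; first exact: reach_le.
case: (boolP [exists i : 'I_#|T|, reach e i u == reach e i.+1 u]).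
  move=> /existsP [i /eqP Hi].
  have E1 := reach_stable (k - i) Hi.
  have E2 := reach_stable (#|T| - i) Hi.
  have ltiT : (i < #|T|)%N := ltn_ord i.
  rewrite subnK in E1; last lia.
  rewrite subnK in E2; last lia.
  by rewrite E1 E2.
move=> Hn; exfalso.
have Hall : (forall i, (i < #|T|)%N -> reach e i u != reach e i.+1 u).
  move=> i Hi; apply/negP => Heq; move/negP: Hn; apply.
  by apply/existsP; exists (Ordinal Hi); rewrite Heq.
have Hm : (#|reach e #|T| u| <= #|T|)%N by apply: max_card.
have := reach_card Hall; lia.
Qed.

Lemma dist_spec u v k : v \in reach e k u ->
  v \in reach e (dist e u v) u /\
  (forall j, v \in reach e j u -> (dist e u v <= j)%N).
Proof.
move=> Hk.
set P := fun k => v \in reach e k u.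
have HT : P #|T| by rewrite /P; exact: (subsetP (reach_max k u)).
have Hhas : has P (iota 0 #|T|.+1).
  by apply/hasP; exists #|T| => //; rewrite mem_iota /=.
have Hlt := Hhas; rewrite has_find size_iota in Hlt.
split.
  have := nth_find 0 Hhas; rewrite nth_iota //.
move=> j Hj; rewrite /dist -/P.
case: (leqP (find P (iota 0 #|T|.+1)) j) => // Hjlt.
have := before_find 0 Hjlt; rewrite nth_iota; last lia.
by rewrite /P add0n Hj.
Qed.

Lemma reach_edge u x k : e u x -> reach e k x \subset reach e k.+1 u.
Proof.
move=> Hux; elim: k => [|k IH].
  apply/subsetP => y; rewrite [reach e 0 x]/= in_set1 => /eqP ->.
  by rewrite reachS !inE; apply/orP; right; apply/existsP; exists u; rewrite inE eqxx.
apply/subsetP => y; rewrite (reachS k x) (reachS k.+1 u) => /setUP [Hy|].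
  by apply/setUP; left; exact: (subsetP IH).
rewrite in_set => /existsP [z /andP [Hz Hzy]].
apply/setUP; right; rewrite in_set; apply/existsP; exists z; rewrite Hzy andbT.
exact: (subsetP IH).
Qed.

Lemma connect_reach u v : connect e u v -> exists k, v \in reach e k u.
Proof.
move=> /connectP [p Hp ->] {v}.
elim: p u Hp => [|x p IH] u /=; first by exists 0%N; rewrite inE.
move=> /andP [Hux Hp]; have [k Hk] := IH x Hp.
by exists k.+1; exact: (subsetP (reach_edge k Hux)).
Qed.

End Gen.

Section Prod.
Variables (T1 T2 : finType) (e1 : rel T1) (e2 : rel T2).
Local Notation E := (cart_rel e1 e2).

Lemma reach_cart k u v x y : (x, y) \in reach E k (u, v) <->
  exists a b, (a + b <= k)%N /\ x \in reach e1 a u /\ y \in reach e2 b v.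
Proof.
elim: k x y => [|k IH] x y.
  rewrite [reach E 0 _]/= in_set1 xpair_eqE; split.
    by move=> /andP [/eqP -> /eqP ->]; exists 0%N, 0%N; rewrite !in_set1 !eqxx.
  move=> [[|a] [[|b] [Hab [Hx Hy]]]] //.
  by move: Hx Hy; rewrite [reach e1 0 _]/= [reach e2 0 _]/= !in_set1 => -> ->.
rewrite reachS; split.
  move=> /setUP [/IH [a [b [Hab [Hx Hy]]]]|].
    by exists a, b; split => //; lia.
  rewrite in_set => /existsP [[x' y'] /andP [/IH [a [b [Hab [Hx Hy]]]]]].
  rewrite /cart_rel /= => /orP [/andP [Hxx /eqP Hyy]|/andP [/eqP Hxx Hyy]].
    exists a.+1, b; split; first lia.
    rewrite -Hyy; split => //; rewrite reachS; apply/setUP; right.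
    by rewrite in_set; apply/existsP; exists x'; rewrite Hx.
  exists a, b.+1; split; first lia.
  rewrite -Hxx; split => //; rewrite reachS; apply/setUP; right.
  by rewrite in_set; apply/existsP; exists y'; rewrite Hy.
move=> [a [b [Hab [Hx Hy]]]].
case: (leqP (a + b) k) => Hk.
  by apply/setUP; left; apply/IH; exists a, b.
case: b Hab Hk Hy => [|b] Hab Hk Hy.
  case: a Hab Hk Hx => [|a] Hab Hk Hx; first lia.
  move: Hx; rewrite reachS => /setUP [Hx|].
    by apply/setUP; left; apply/IH; exists a, 0%N; split => //; lia.
  rewrite in_set => /existsP [x' /andP [Hx' Hxx]].
  apply/setUP; right; rewrite in_set; apply/existsP; exists (x', y).
  apply/andP; split; last by rewrite /cart_rel /= Hxx eqxx.
  by apply/IH; exists a, 0%N; split => //; lia.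
move: Hy; rewrite reachS => /setUP [Hy|].
  by apply/setUP; left; apply/IH; exists a, b; split => //; lia.
rewrite in_set => /existsP [y' /andP [Hy' Hyy]].
apply/setUP; right; rewrite in_set; apply/existsP; exists (x, y').
apply/andP; split; last by rewrite /cart_rel /= Hyy eqxx orbT.
by apply/IH; exists a, b; split => //; lia.
Qed.

Hypothesis C1 : connected_graph e1.
Hypothesis C2 : connected_graph e2.

Lemma dist_cart u v x y :
  dist E (u, v) (x, y) = (dist e1 u x + dist e2 v y)%N.
Proof.
have [k1 H1] := connect_reach (C1 u x).
have [k2 H2] := connect_reach (C2 v y).
have [S1 M1] := dist_spec H1.
have [S2 M2] := dist_spec H2.
have Hp : (x, y) \in reach E (dist e1 u x + dist e2 v y) (u, v).
  by apply/reach_cart; exists (dist e1 u x), (dist e2 v y).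
have [Sp Mp] := dist_spec Hp.
have Hle := Mp _ Hp.
have [a [b [Hab [Ha Hb]]]] := (reach_cart _ _ _ _ _).1 Sp.
have := M1 _ Ha; have := M2 _ Hb; lia.
Qed.

Lemma Lset_cart1 u1 u2 v :
  Lset E (u1, v) (u2, v) \subset [set p | p.1 \in Lset e1 u1 u2].
Proof.
apply/subsetP => [[x y]]; rewrite !in_set !dist_cart /=.
by apply: contra => /eqP ->.
Qed.

Lemma Lset_cart2 u v1 v2 :
  Lset E (u, v1) (u, v2) \subset [set p | p.2 \in Lset e2 v1 v2].
Proof.
apply/subsetP => [[x y]]; rewrite !in_set !dist_cart /=.
by apply: contra => /eqP ->.
Qed.

End Prod.

Local Open Scope ring_scope.

Lemma sum_sub_le (R : realFieldType) (I : finType) (A B : {set I}) (f : I -> R) :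
  (forall i, 0 <= f i) -> A \subset B -> \sum_(i in A) f i <= \sum_(i in B) f i.
Proof.
move=> H0 /subsetP HAB; rewrite [X in X <= _]big_mkcond [X in _ <= X]big_mkcond.
apply: ler_sum => i _; case: (boolP (i \in A)) => HA.
  by rewrite (HAB _ HA).
by case: (i \in B).
Qed.

Lemma min_sum (R : realFieldType) (I : finType) (A : {pred I}) (s : I -> R) :
  (forall i, 0 <= s i) -> 1 <= \sum_(i in A) s i ->
  1 <= \sum_(i in A) Num.min 1 (s i).
Proof.
move=> H0 H1.
case: (boolP [exists i in A, 1 <= s i]).
  move=> /existsP [i /andP [HiA Hi]].
  rewrite (bigD1 i) //= min_l //.
  rewrite lerDl; apply: sumr_ge0 => j _.
  by rewrite le_min ler01 H0.
rewrite negb_exists => /forallP Hn.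
rewrite (eq_bigr s) // => i HiA.
have := Hn i; rewrite HiA /= -ltNge => Hi.
by rewrite min_r // ltW.
Qed.

Lemma proj_cart1 (R : realFieldType) (T1 T2 : finType) (e1 : rel T1) (e2 : rel T2)
  (v0 : T2) (f : T1 * T2 -> R) :
  connected_graph e1 -> connected_graph e2 ->
  local_resolving (cart_rel e1 e2) f ->
  exists g : T1 -> R, local_resolving e1 g /\ weight g <= weight f.
Proof.
move=> C1 C2 [Hf01 Hfe].
have Hf0 : forall p, 0 <= f p by move=> p; case/andP: (Hf01 p).
exists (fun x => Num.min 1 (\sum_y f (x, y))).
have Hs0 : forall x, 0 <= \sum_y f (x, y) by move=> x; apply: sumr_ge0.
split; last first.
  rewrite /weight.
  have -> : \sum_(p : T1 * T2) f p = \sum_x \sum_y f (x, y).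
    by rewrite pair_big; apply: eq_bigr => -[].
  by apply: ler_sum => x _; rewrite ge_min lexx orbT.
split.
  by move=> x; rewrite le_min ler01 Hs0 ge_min lexx.
move=> u1 u2 Hu.
have He : cart_rel e1 e2 (u1, v0) (u2, v0) by rewrite /cart_rel /= Hu eqxx.
have H1 := Hfe _ _ He.
have H2 := le_trans H1 (sum_sub_le Hf0 (Lset_cart1 C1 C2 u1 u2 v0)).
apply: min_sum => //.
apply: (le_trans H2); rewrite le_eqVlt; apply/orP; left; apply/eqP.
rewrite pair_big_dep /=.
by apply: eq_big => -[x y] //=; rewrite in_set andbT.
Qed.

Lemma proj_cart2 (R : realFieldType) (T1 T2 : finType) (e1 : rel T1) (e2 : rel T2)
  (u0 : T1) (f : T1 * T2 -> R) :
  connected_graph e1 -> connected_graph e2 ->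
  local_resolving (cart_rel e1 e2) f ->
  exists g : T2 -> R, local_resolving e2 g /\ weight g <= weight f.
Proof.
move=> C1 C2 [Hf01 Hfe].
have Hf0 : forall p, 0 <= f p by move=> p; case/andP: (Hf01 p).
exists (fun y => Num.min 1 (\sum_x f (x, y))).
have Hs0 : forall y, 0 <= \sum_x f (x, y) by move=> y; apply: sumr_ge0.
split; last first.
  rewrite /weight.
  have -> : \sum_(p : T1 * T2) f p = \sum_y \sum_x f (x, y).
    by rewrite exchange_big pair_big; apply: eq_bigr => -[].
  by apply: ler_sum => y _; rewrite ge_min lexx orbT.
split.
  by move=> y; rewrite le_min ler01 Hs0 ge_min lexx.
move=> v1 v2 Hv.
have He : cart_rel e1 e2 (u0, v1) (u0, v2) by rewrite /cart_rel /= Hv eqxx orbT.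
have H1 := Hfe _ _ He.
have H2 := le_trans H1 (sum_sub_le Hf0 (Lset_cart2 C1 C2 u0 v1 v2)).
apply: min_sum => //.
apply: (le_trans H2); rewrite le_eqVlt; apply/orP; left; apply/eqP.
rewrite exchange_big pair_big_dep /=.
by apply: eq_big => -[x y] //=; rewrite in_set.
Qed.

Theorem corollary3p12 (R : realFieldType) (T1 T2 : finType)
    (e1 : rel T1) (e2 : rel T2) (rG rH : R) :
  simple_graph e1 -> connected_graph e1 ->
  simple_graph e2 -> connected_graph e2 ->
  (2 <= #|T1|)%N -> (2 <= #|T2|)%N ->
  is_ldimf e1 rG -> rG = #|T1|%:R / 2 ->
  is_ldimf e2 rH -> rH = #|T2|%:R / 2 ->
  forall f : T1 * T2 -> R, local_resolving (cart_rel e1 e2) f ->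
    Num.max rG rH <= weight f.
Proof.
move=> _ C1 _ C2 H1 H2 [_ MG] _ [_ MH] _ f Hf.
have [u0 _] : exists u : T1, u \in T1 by apply/card_gt0P; apply: leq_trans H1.
have [v0 _] : exists v : T2, v \in T2 by apply/card_gt0P; apply: leq_trans H2.
rewrite ge_max; apply/andP; split.
  have [g [Hg Hw]] := proj_cart1 v0 C1 C2 Hf.
  exact: le_trans (MG _ Hg) Hw.
have [g [Hg Hw]] := proj_cart2 u0 C1 C2 Hf.
exact: le_trans (MH _ Hg) Hw.
Qed.
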